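(* Let $n\ge3$. The cycle graph on $n$ nodes is reachable (observable) from every pair of distinct nodes if and only if $n$ is prime.
   Context: The cycle graph on nodes $\{1,\dots,n\}$ has edges $\{i,(i\bmod n)+1\}$; its Laplacian $L$ has $2$ on the diagonal and $-1$ in entries $(i,j)$ with $j\equiv i\pm1\pmod n$. Reachable from a pair $\{i_1,i_2\}$ means that $(L,B)$ with $B=[e_{i_1}|e_{i_2}]$ is reachable (reachability matrix has rank $n$); observable means $(L,B^T)$ is observable. *)

(* Defs.v *)
From mathcomp Require Import all_boot all_order all_algebra.
Set Implicit Arguments. Unset Strict Implicit. Unset Printing Implicit Defensive.
Import Order.TTheory GRing.Theory Num.Theory.
Local Open Scope ring_scope.

(* Laplacian of the cycle graph on nodes 'I_n (node k here = node k+1 in the paper):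
   2 on the diagonal, -1 at (i,j) with j = i +- 1 mod n, 0 elsewhere. *)
Definition cycle_laplacian (R : nzRingType) (n : nat) : 'M[R]_n :=
  \matrix_(i < n, j < n)
    if i == j then 2%:R
    else if ((j : nat) == (i.+1 %% n)%N) || ((i : nat) == (j.+1 %% n)%N) then -1
    else 0.

Definition reach_mx (R : nzRingType) (n m : nat) (A : 'M[R]_n) (B : 'M[R]_(n, m))
  : 'M[R]_(n, \sum_(k < n) m) :=
  \mxrow_(k < n) (A ^+ k *m B).

Definition obs_mx (R : nzRingType) (n p : nat) (A : 'M[R]_n) (C : 'M[R]_(p, n))
  : 'M[R]_(\sum_(k < n) p, n) :=
  \mxcol_(k < n) (C *m A ^+ k).

Definition reachable (F : fieldType) (n m : nat) (A : 'M[F]_n) (B : 'M[F]_(n, m)) : bool :=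
  \rank (reach_mx A B) == n.

Definition observable (F : fieldType) (n p : nat) (A : 'M[F]_n) (C : 'M[F]_(p, n)) : bool :=
  \rank (obs_mx A C) == n.

Definition pair_input (R : nzRingType) (n : nat) (i1 i2 : 'I_n) : 'M[R]_(n, 1 + 1) :=
  row_mx (delta_mx i1 (0 : 'I_1)) (delta_mx i2 (0 : 'I_1)).

(* Main.v *)
Require Import Defs.
From mathcomp Require Import all_boot all_order all_algebra.
From mathcomp Require Import ring lra zify.
Import Order.TTheory GRing.Theory Num.Theory.
Local Open Scope ring_scope.

Lemma rank_full_iff (F : fieldType) n p (A : 'M[F]_(n, p)) :
  (\rank A == n) <-> (forall w : 'rV_n, w *m A = 0 -> w = 0).
Proof.
split.
- move=> /eqP rA w wA.
  have K0 : kermx A = 0 by apply/eqP; rewrite -mxrank_eq0 mxrank_ker rA subnn.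
  have : (w <= kermx A)%MS by apply/sub_kermxP.
  by rewrite K0 submx0 => /eqP.
- move=> H.
  have K0 : kermx A = 0.
    by apply/row_matrixP=> i; rewrite row0; apply: H; rewrite -row_mul mulmx_ker row0.
  have := mxrank_ker A; rewrite K0 mxrank0 => /esym/eqP; rewrite subn_eq0 => le.
  by rewrite eqn_leq rank_leq_row le.
Qed.

Section Cyc.
Variable R : realFieldType.
Variable m : nat.
Local Notation n := m.+3.
Local Notation L := (cycle_laplacian R n).
Local Notation Z := 'I_n.

Lemma Zneq01 (j : Z) : (j == j + 1) = false.
Proof.
apply/negbTE; rewrite -{1}(addr0 j) (inj_eq (addrI j)).
by rewrite eq_sym oner_eq0.
Qed.

Lemma Z2 : (1 + 1 : Z) != 0.
Proof. by rewrite -val_eqE. Qed.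

Lemma L_entry (i j : Z) :
  L i j = 2%:R * (i == j)%:R - (i == j - 1)%:R - (i == j + 1)%:R.
Proof.
rewrite mxE.
have E1 : ((j : nat) == (i.+1 %% n)%N) = (i == j - 1).
  by rewrite [RHS]eq_sym subr_eq -val_eqE /= addn1.
have E2 : ((i : nat) == (j.+1 %% n)%N) = (i == j + 1).
  by rewrite -val_eqE /= addn1.
rewrite E1 E2; case: (eqVneq i j) => [->|nij].
  have -> : (j == j - 1) = false by rewrite eq_sym subr_eq Zneq01.
  by rewrite Zneq01 /=; ring.
case: (eqVneq i (j - 1)) => [h1|h1]; case: (eqVneq i (j + 1)) => [h2|h2] /=.
- exfalso; have e : (j + 1) - (j - 1) = 1 + 1 :> Z by ring.
  by move: Z2; rewrite -e -h2 -h1 subrr eqxx.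
- ring.
- ring.
- ring.
Qed.

Lemma sum_delta (F : Z -> R) (c : Z) : \sum_i F i * (i == c)%:R = F c.
Proof.
rewrite (bigD1 c) //= eqxx mulr1 big1 ?addr0 // => i /negbTE ->.
by rewrite mulr0.
Qed.

Lemma mulL (w : 'rV[R]_n) j :
  (w *m L) 0 j = 2%:R * w 0 j - w 0 (j - 1) - w 0 (j + 1).
Proof.
rewrite mxE.
rewrite (eq_bigr (fun i => 2%:R * (w 0 i * (i == j)%:R) - w 0 i * (i == j - 1)%:R
   - w 0 i * (i == j + 1)%:R)); last by move=> i _; rewrite L_entry; ring.
by rewrite !sumrB -mulr_sumr !sum_delta.
Qed.

Lemma anti (w : 'rV[R]_n) (a : Z) :
  (forall k, (k < n)%N -> (w *m L ^+ k) 0 a = 0) ->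
  forall x, w 0 x = - w 0 (a + a - x).
Proof.
move=> H.
pose v k x := (w *m L ^+ k) 0 x.
have rec k x : v k.+1 x = 2%:R * v k x - v k (x - 1) - v k (x + 1).
  by rewrite /v exprSr mulmxA mulL.
pose f k (i : Z) := v k (a + i) + v k (a - i).
have frec k i : f k.+1 i = 2%:R * f k i - f k (i - 1) - f k (i + 1).
  rewrite /f !rec.
  have e1 : a + i - 1 = a + (i - 1) by ring.
  have e2 : a + i + 1 = a + (i + 1) by ring.
  have e3 : a - i - 1 = a - (i + 1) by ring.
  have e4 : a - i + 1 = a - (i - 1) by ring.
  rewrite e1 e2 e3 e4; ring.
have f0 k : (k < n)%N -> f k 0 = 0 by move=> kn; rewrite /f addr0 subr0 /v H // addr0.
have fsym k i : f k (- i) = f k i by rewrite /f opprK addrC.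
pose P j := forall k, (k + j < n)%N -> f k (j%:R) = 0.
have main j : P j /\ P j.+1.
  elim: j => [|j [IH1 IH2]].
    split; first by move=> k; rewrite addn0; apply: f0.
    move=> k kn; have := frec k 0.
    rewrite sub0r add0r fsym f0 ?f0; [|lia|lia].
    move=> e; have : f k 1 = 0 by lra.
    done.
  split; first exact: IH2.
  move=> k kn; have := frec k (j.+1%:R).
  have h1 : (j.+1)%:R - 1 = j%:R :> Z by rewrite -natr1 addrK.
  have h2 : (j.+1)%:R + 1 = (j.+2)%:R :> Z by rewrite natr1.
  rewrite h1 h2 (IH2 k.+1) ?(IH2 k) ?(IH1 k); [|lia|lia|lia].
  move=> e; lra.
move=> x.
have := (main (val (x - a))).1 0%N.
rewrite natr_Zp add0n ltn_ord => /(_ isT).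
have e : a + (x - a) = x by ring.
rewrite /f /v expr0 mulmx1 e => /eqP; rewrite addr_eq0 => /eqP ->.
congr (- w 0 _); ring.
Qed.

Lemma unitZ (z : Z) : prime n -> z != 0 -> z \is a GRing.unit.
Proof.
move=> pn nz; rewrite -(natr_Zp z) (unitZpE (p := n)) // prime_coprime //.
rewrite gtnNdvd // lt0n; move: nz; by rewrite -val_eqE.
Qed.

Lemma prime_kill (w : 'rV[R]_n) (a b : Z) : prime n -> a != b ->
  (forall k, (k < n)%N -> (w *m L ^+ k) 0 a = 0) ->
  (forall k, (k < n)%N -> (w *m L ^+ k) 0 b = 0) -> w = 0.
Proof.
move=> pn ab Hka Hkb.
have Ha := @anti w a Hka; have Hb := @anti w b Hkb.
have wa : w 0 a = 0.
  have := Ha a; have -> : a + a - a = a by ring.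
  move=> e; lra.
pose t := (b - a) + (b - a).
have per x : w 0 (x + t) = w 0 x.
  rewrite [LHS]Hb [RHS]Ha; congr (- w 0 _); rewrite /t; ring.
have perk k x : w 0 (x + k%:R * t) = w 0 x.
  elim: k => [|k IH]; first by rewrite mul0r addr0.
  by rewrite -natr1 mulrDl mul1r addrA per IH.
have tu : t \is a GRing.unit.
  have -> : t = (1 + 1) * (b - a) by rewrite /t; ring.
  rewrite unitrM unitZ ?Z2 //= unitZ //.
  by rewrite subr_eq0 eq_sym.
apply/rowP => j; rewrite mxE.
have -> : j = a + (val ((j - a) / t))%:R * t.
  by rewrite natr_Zp divrK // addrC subrK.
by rewrite perk.
Qed.

Lemma mod_pair (c r r' : nat) : (0 < c)%N -> (r < c)%N -> (r' < c)%N ->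
  ((r' + r) %% c = 0)%N -> (r' + r = 0)%N \/ (r' + r = c)%N.
Proof.
move=> c0 rc rc' h.
have := divn_eq (r' + r)%N c; rewrite h addn0.
have : ((r' + r) %/ c < 2)%N by rewrite ltn_divLR //; lia.
move: ((r' + r) %/ c)%N => q; case: q => [|[|q]] /=; lia.
Qed.

Lemma modc_add (c : nat) (cn : (c %| n)%N) (x z : Z) :
  ((val (x + z)%R) %% c = (x %% c + z) %% c)%N.
Proof. by rewrite /= modn_dvdm // modnDml. Qed.

Definition G (c : nat) (u : 'rV[R]_n) :=
  (forall x, u 0 (- x) = - u 0 x) /\
  (forall x y : Z, ((val x) %% c = (val y) %% c)%N -> u 0 x = u 0 y).

Lemma G_step c (cn : (c %| n)%N) u : G c u -> G c (u *m L).
Proof.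
move=> [Ha Hm]; split.
  move=> x; rewrite !mulL.
  have e1 : - x - 1 = - (x + 1) by ring.
  have e2 : - x + 1 = - (x - 1) by ring.
  rewrite e1 e2 !Ha; ring.
move=> x y h; rewrite !mulL (Hm x y) // (Hm (x - 1) (y - 1)) ?(Hm (x + 1) (y + 1)) //.
  by rewrite !modc_add // h.
by rewrite !modc_add // h.
Qed.

Lemma G_pow c (cn : (c %| n)%N) u k : G c u -> G c (u *m L ^+ k).
Proof.
move=> Gu; elim: k => [|k IH]; first by rewrite expr0 mulmx1.
by rewrite exprSr mulmxA; apply: G_step.
Qed.

Lemma G_zero c u : G c u -> u 0 0 = 0.
Proof. move=> [Ha _]; have := Ha 0; rewrite oppr0 => e; lra. Qed.

Definition wit (c : nat) : 'rV[R]_n :=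
  \row_(x < n) ((((x : nat) %% c == 1)%N)%:R - (((x : nat) %% c == c.-1)%N)%:R).

Lemma G_wit c (c2 : (2 < c)%N) (cn : (c %| n)%N) : G c (wit c).
Proof.
split; last by move=> x y h; rewrite !mxE h.
move=> x; rewrite !mxE.
have h : ((val (- x)%R %% c + x %% c) %% c = 0)%N.
  rewrite modnDmr -modc_add // addNr.
  by rewrite /= mod0n.
have := mod_pair _ _ _ _ (ltn_pmod x _) (ltn_pmod (val (- x)) _) h.
have := ltn_pmod x (ltnW (ltnW c2)); have := ltn_pmod (val (- x)) (ltnW (ltnW c2)).
move: (val (- x) %% c)%N ((val x) %% c)%N => r' r hr' hr.
move=> /(_ (ltnW (ltnW c2))) hs.
have E1 : (r' == 1)%N = (r == c.-1)%N by apply/eqP/eqP; lia.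
have E2 : (r' == c.-1)%N = (r == 1)%N by apply/eqP/eqP; lia.
rewrite E1 E2; ring.
Qed.

Lemma wit1 c (c2 : (2 < c)%N) : wit c 0 1 = 1.
Proof.
rewrite mxE /= (@modn_small 1 n) // modn_small; last lia.
have -> : (1 == c.-1)%N = false by apply/eqP; lia.
by rewrite eqxx subr0.
Qed.

Lemma Lsym : L^T = L.
Proof.
apply/matrixP => i j; rewrite mxE !L_entry.
have e1 : (j == i - 1) = (i == j + 1) by rewrite eq_sym subr_eq.
have e2 : (j == i + 1) = (i == j - 1) by rewrite [RHS]eq_sym subr_eq.
by rewrite e1 e2 eq_sym; ring.
Qed.

Lemma Lpow_sym k : (L ^+ k)^T = L ^+ k.
Proof.
elim: k => [|k IH]; first by rewrite expr0; apply/matrixP => i j; rewrite !mxE eq_sym.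
by rewrite exprS -mulmxE trmx_mul IH Lsym mulmxE -exprSr exprS.
Qed.

Lemma reach0 (w : 'rV[R]_n) i1 i2 :
  w *m reach_mx L (pair_input R i1 i2) = 0 <->
  (forall k, (k < n)%N -> (w *m L ^+ k) 0 i1 = 0 /\ (w *m L ^+ k) 0 i2 = 0).
Proof.
rewrite /reach_mx mul_mxrow.
have blk k : w *m (L ^+ k *m pair_input R i1 i2) =
   row_mx (col i1 (w *m L ^+ k)) (col i2 (w *m L ^+ k)).
  by rewrite mulmxA /pair_input mul_mx_row -!colE.
split.
- move=> H k kn.
  have := congr1 (fun M => submxrow M (Ordinal kn)) H.
  rewrite /= mxrowK submxrow0 blk => /eqP; rewrite row_mx_eq0 => /andP [/eqP h1 /eqP h2].
  move/matrixP: h1 => /(_ 0 0); move/matrixP: h2 => /(_ 0 0); rewrite !mxE => -> ->.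
  by [].
- move=> H; apply/mxrowP => j; rewrite mxrowK submxrow0 blk.
  have [h1 h2] := H j (ltn_ord j).
  apply/eqP; rewrite row_mx_eq0; apply/andP; split; apply/eqP/matrixP => r s.
    by rewrite !ord1 [LHS]mxE [RHS]mxE h1.
  by rewrite !ord1 [LHS]mxE [RHS]mxE h2.
Qed.

Lemma reach_iff i1 i2 : reachable L (pair_input R i1 i2) <->
  (forall w : 'rV[R]_n,
    (forall k, (k < n)%N -> (w *m L ^+ k) 0 i1 = 0 /\ (w *m L ^+ k) 0 i2 = 0) -> w = 0).
Proof.
rewrite /reachable rank_full_iff; split => H w Hw; apply: H; exact/reach0.
Qed.

Lemma obs_eq i1 i2 : observable L (pair_input R i1 i2)^T = reachable L (pair_input R i1 i2).
Proof.
rewrite /observable /reachable -[in RHS]mxrank_tr.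
congr (\rank _ == _).
rewrite /obs_mx /reach_mx tr_mxrow; apply: eq_mxcol => k.
by rewrite trmx_mul Lpow_sym.
Qed.

Lemma comp_not_reach (c : nat) (i2 : Z) : (2 < c)%N -> (c %| n)%N ->
  ((val i2 %% c = 0)%N \/ (val i2 %% c = val (- i2)%R %% c)%N) ->
  ~ reachable L (pair_input R 0 i2).
Proof.
move=> c2 cn hi /reach_iff H.
have : wit c = 0.
  apply: H => k kn; have [Ha Hm] := @G_pow c cn (wit c) k (@G_wit c c2 cn).
  split; first exact: (@G_zero c _ (conj Ha Hm)).
  case: hi => hi.
    by rewrite (Hm i2 0) ?hi ?mod0n //; exact: (@G_zero c _ (conj Ha Hm)).
  have := Ha i2; rewrite (Hm (- i2) i2) // => e; lra.
move/matrixP => /(_ 0 1); rewrite (@wit1 c c2) mxE => /eqP; by rewrite oner_eq0.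
Qed.
End Cyc.


Theorem mainTheorem11 (R : realFieldType) (n : nat) (hn : (3 <= n)%N) :
  ((forall i1 i2 : 'I_n, i1 != i2 ->
      reachable (cycle_laplacian R n) (pair_input R i1 i2)) <-> prime n)
  /\
  ((forall i1 i2 : 'I_n, i1 != i2 ->
      observable (cycle_laplacian R n) (pair_input R i1 i2)^T) <-> prime n).
Proof.
case: n hn => [|[|[|m]]] // _.
have key : (forall i1 i2 : 'I_(m.+3), i1 != i2 ->
    reachable (cycle_laplacian R m.+3) (pair_input R i1 i2)) <-> prime m.+3.
  split.
  - move=> H; apply/idPn => np.
    have [c [i2 [c2 [cn [nz hi]]]]] : exists c (i2 : 'I_(m.+3)),
        (2 < c)%N /\ (c %| m.+3)%N /\ i2 != 0 /\
        ((val i2 %% c = 0)%N \/ (val i2 %% c = val (- i2)%R %% c)%N).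
      move: np => /primePn [//|[d d1 dn]].
      have dl : (d < m.+3)%N by case/andP: d1.
      have d1' : (1 < d)%N by case/andP: d1.
      case: (ltnP 2 d) => d2.
        exists d, (inord d); split; first done; split; first done.
        split; last by left; rewrite /= inordK // modnn.
        by rewrite -val_eqE /= inordK //; lia.
      have dd : d = 2%N by lia.
      have de : ((m.+3 %/ d) * d = m.+3)%N by rewrite divnK.
      move: de; rewrite dd; move: (m.+3 %/ 2)%N => e de.
      case: (ltnP 2 e) => e2.
        have el : (e < m.+3)%N by lia.
        exists e, (inord e); split; first done; split.
          by rewrite -de dvdn_mulr.
        split; last by left; rewrite /= inordK // modnn.
        by rewrite -val_eqE /= inordK //; lia.
      have m1 : m = 1%N by lia.
      subst m; exists 4%N, (inord 2); split; first done; split; first done.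
      split; first by rewrite -val_eqE /= inordK.
      by right; rewrite /= !inordK.
    have := H 0 i2; rewrite eq_sym nz => /(_ isT) r.
    exact: (@comp_not_reach R m c i2 c2 cn hi r).
  - move=> pn i1 i2 ne; apply/(@reach_iff R m) => w Hw.
    by apply: (@prime_kill R m w i1 i2 pn ne) => k kn; [exact: (Hw k kn).1 | exact: (Hw k kn).2].
split => //.
rewrite -key; split => H i1 i2 ne; [rewrite -obs_eq | rewrite obs_eq]; exact: H.
Qed.
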